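(* Let $(X,d)$ be a finite metric space. Consider sequences $G_0,G_1,\dots,G_k$ of graphs on vertex set $X$ where $G_0$ is the complete graph on $X$ and each $G_{i+1}$ is obtained from $G_i$ through a $d$-erasure. If such a sequence is maximal (i.e. $G_k$ admits no $d$-erasure), then $G_k$ is a minimum spanning tree of $(X,d)$. Moreover, every minimum spanning tree of $(X,d)$ arises as the final graph $G_k$ of some such maximal sequence.
   Context: All graphs are finite, undirected, simple; edges $xy$ are weighted by $d(xy)=d(x,y)$. A minimum spanning tree of $(X,d)$ is a spanning tree of the complete graph on $X$ minimizing the sum of the weights of its edges. A facet edge of $G$ is an edge $xy$ such that $\{x,y\}$ is a maximal clique of $G$. An edge of $G$ is exposed if it is contained in a unique maximal clique of $G$ and it is not a facet edge. For graphs $G,H$ on vertex set $X$, $H$ is obtained from $G$ through a $d$-erasure if $H=G-e$ for an exposed edge $e$ of $G$ such that $d(e)\ge d(e')$ for every exposed edge $e'$ of $G$. *)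

(* Defs.v *)
From HB Require Import structures.
From mathcomp Require Import all_boot all_order all_algebra.
From mathcomp Require Import reals.
Set Implicit Arguments. Unset Strict Implicit. Unset Printing Implicit Defensive.
Import Order.TTheory GRing.Theory Num.Theory.
Local Open Scope ring_scope.

Definition is_metric (R : realType) (X : finType) (d : X -> X -> R) : Prop :=
  [/\ forall x y, 0 <= d x y,
      forall x y, (d x y == 0) = (x == y),
      forall x y, d x y = d y x &
      forall x y z, d x z <= d x y + d y z].

(* A (finite, simple, undirected) graph on vertex set X is its set of edges,
   each edge being a 2-element subset of X. *)
Notation graph X := {set {set X}}.

Definition complete_graph (X : finType) : graph X :=
  [set e : {set X} | #|e| == 2%N].

Definition ew (R : realType) (X : finType) (d : X -> X -> R) (e : {set X}) : R :=
  if enum e is [:: x; y] then d x y else 0.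

Definition clique (X : finType) (G : graph X) (C : {set X}) : bool :=
  [forall x in C, forall y in C, (x != y) ==> ([set x; y] \in G)].

Definition maxclique (X : finType) (G : graph X) (C : {set X}) : bool :=
  clique G C && [forall C' : {set X}, (clique G C' && (C \subset C')) ==> (C' == C)].

Definition facet_edge (X : finType) (G : graph X) (e : {set X}) : bool :=
  (e \in G) && maxclique G e.

Definition exposed (X : finType) (G : graph X) (e : {set X}) : bool :=
  [&& e \in G,
      #|[set C : {set X} | maxclique G C & e \subset C]| == 1%N &
      ~~ facet_edge G e].

Definition derasure (R : realType) (X : finType) (d : X -> X -> R)
  (G H : graph X) : bool :=
  [exists e : {set X}, [&& exposed G e, H == G :\ e &
     [forall e' : {set X}, exposed G e' ==> (ew d e' <= ew d e)]]].

Definition adj (X : finType) (G : graph X) : rel X := fun x y => [set x; y] \in G.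

Definition connected (X : finType) (G : graph X) : Prop :=
  forall x y : X, connect (adj G) x y.

Definition acyclic (X : finType) (G : graph X) : Prop :=
  ~ exists s : seq X, [/\ uniq s, (3 <= size s)%N & cycle (adj G) s].

Definition spanning_tree (X : finType) (T : graph X) : Prop :=
  [/\ T \subset complete_graph X, connected T & acyclic T].

Definition total_weight (R : realType) (X : finType) (d : X -> X -> R)
  (T : graph X) : R := \sum_(e in T) ew d e.

Definition is_MST (R : realType) (X : finType) (d : X -> X -> R) (T : graph X) : Prop :=
  spanning_tree T /\
  forall T' : graph X, spanning_tree T' -> total_weight d T <= total_weight d T'.

(* Main.v *)
Require Import Defs.
From HB Require Import structures.
From mathcomp Require Import all_boot all_order all_algebra.
From mathcomp Require Import reals.
From mathcomp Require Import lra.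
From Stdlib Require Import Classical.
Set Implicit Arguments. Unset Strict Implicit. Unset Printing Implicit Defensive.
Import Order.TTheory GRing.Theory Num.Theory.

Section Basic.
Variable X : finType.
Implicit Types (G H : graph X) (e f C D W : {set X}) (x y a b u v : X).

Lemma adjC G x y : adj G x y = adj G y x.
Proof. by rewrite /adj setUC. Qed.

Lemma inK f : (f \in complete_graph X) = (#|f| == 2).
Proof. by rewrite inE. Qed.

Lemma K2 f : f \in complete_graph X -> exists x y, x != y /\ f = [set x; y].
Proof. by rewrite inK => /cards2P. Qed.

Lemma adj_neq G x y : G \subset complete_graph X -> adj G x y -> x != y.
Proof.
move=> /subsetP sG /sG; rewrite inK cards2.
by case: (x != y).
Qed.

Lemma set2_eq a b x y : [set a; b] = [set x; y] ->
  (a = x /\ b = y) \/ (a = y /\ b = x).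
Proof.
move=> E.
have ha : a \in [set x; y] by rewrite -E set21.
have hb : b \in [set x; y] by rewrite -E set22.
have hx : x \in [set a; b] by rewrite E set21.
have hy : y \in [set a; b] by rewrite E set22.
case/set2P: ha => ha; case/set2P: hb => hb; subst; auto.
- by case/set2P: hy => ->; auto.
- by case/set2P: hx => ->; auto.
Qed.

Lemma cliqueP G C : reflect (forall a b, a \in C -> b \in C -> a != b -> adj G a b) (clique G C).
Proof.
apply: (iffP forall_inP) => [h a b aC bC ab | h a aC].
  by have /forall_inP/(_ b bC)/implyP := h a aC; apply.
by apply/forall_inP => b bC; apply/implyP; apply: h.
Qed.

Lemma maxcliqueP G C : reflect (clique G C /\ forall D, clique G D -> C \subset D -> D = C)
  (maxclique G C).
Proof.
apply: (iffP andP) => [[cC /forallP h] | [cC h]]; split => //.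
  by move=> D cD sCD; have /implyP := h D; rewrite cD sCD => /(_ isT) /eqP.
by apply/forallP => D; apply/implyP => /andP[cD sCD]; rewrite (h D cD sCD).
Qed.

Lemma clique_ext G K : clique G K -> exists D, maxclique G D /\ K \subset D.
Proof.
move=> cK.
pose P := fun D : {set X} => clique G D && (K \subset D).
have PK : P K by rewrite /P cK subxx.
case: (@arg_maxP _ _ {set X} K P (fun D => #|D|) PK) => D /andP[cD sKD] hmax.
exists D; split => //; apply/maxcliqueP; split => // D' cD' sDD'.
apply/eqP; rewrite eq_sym eqEcard sDD' /=.
by apply: hmax; rewrite /P cD' (subset_trans sKD sDD').
Qed.

Lemma clique_sub G H C : G \subset H -> clique G C -> clique H C.
Proof.
move=> /subsetP sGH /cliqueP h; apply/cliqueP => a b aC bC ab.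
exact: sGH (h a b aC bC ab).
Qed.

Definition mcl G e := [set C : {set X} | maxclique G C & e \subset C].

Lemma exposedE G e : exposed G e ->
  exists C, [/\ e \in G, maxclique G C, e \subset C, C != e &
     forall D, maxclique G D -> e \subset D -> D = C].
Proof.
case/and3P => eG /cards1P [C hC] nf.
have : C \in mcl G e by rewrite /mcl hC set11.
rewrite inE => /andP[mC sC]; exists C; split => //.
  apply/eqP => CE; move: nf; rewrite /facet_edge eG -CE mC //.
move=> D mD sD.
have : D \in mcl G e by rewrite inE mD sD.
by rewrite /mcl hC inE => /eqP.
Qed.

Lemma exposedI G e C : e \in G -> maxclique G C -> e \subset C -> C != e ->
  (forall D, maxclique G D -> e \subset D -> D = C) -> exposed G e.
Proof.
move=> eG mC sC nCe h; apply/and3P; split => //.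
  apply/cards1P; exists C; apply/setP => D; rewrite !inE.
  apply/andP/eqP => [[mD sD] | ->]; first exact: h.
  by split.
rewrite /facet_edge eG /=; apply/negP => me.
by move: nCe; rewrite (h e me (subxx e)) eqxx.
Qed.

End Basic.

Section Chordal.
Variable X : finType.
Implicit Types (G H : graph X) (e f C D W : {set X}) (x y a b u v : X).

Definition simp_in G W v := forall a b, a \in W -> b \in W -> adj G v a -> adj G v b ->
  a != b -> adj G a b.
Definition SIMP G := forall W : {set X}, W != set0 -> exists2 v, v \in W & simp_in G W v.
Definition loopless G := G \subset complete_graph X.

Lemma simp_lift G W v c : simp_in G (W :\ v) c -> ~~ adj G v c -> simp_in G W c.
Proof.
move=> h nvc p q pW qW cp cq pq.
have pv : p != v by apply: contraNneq nvc => <-; rewrite adjC.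
have qv : q != v by apply: contraNneq nvc => <-; rewrite adjC.
by apply: h => //; rewrite !inE ?pv ?qv.
Qed.

Lemma dirac G : loopless G -> SIMP G -> forall W,
  (exists a b, [/\ a \in W, b \in W, a != b & ~~ adj G a b]) ->
  exists v1 v2, [/\ v1 \in W, v2 \in W, v1 != v2, ~~ adj G v1 v2 &
     simp_in G W v1 /\ simp_in G W v2].
Proof.
move=> lG sG W; have [n] := ubnP #|W|; elim: n W => // n IH W /ltnSE leWn.
move=> [a [b [aW bW ab nab]]].
have W0 : W != set0 by apply/set0Pn; exists a.
have [v vW sv] := sG W W0.
have ltW : #|W :\ v| < #|W| by rewrite (cardsD1 v W) vW.
case: (classic (exists a b, [/\ a \in W :\ v, b \in W :\ v, a != b & ~~ adj G a b])).
  move=> ex.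
  have [a' [b' [a'W b'W a'b' na'b' [sa sb]]]] := IH (W :\ v) (leq_trans ltW leWn) ex.
  have a'W0 : a' \in W by case/setD1P: a'W.
  have b'W0 : b' \in W by case/setD1P: b'W.
  have a'v : a' != v by case/setD1P: a'W.
  have b'v : b' != v by case/setD1P: b'W.
  case: (boolP (adj G v a')) => va'.
    case: (boolP (adj G v b')) => vb'.
      by move: na'b'; rewrite (sv a' b' a'W0 b'W0 va' vb' a'b').
    exists v, b'; split => //; first by rewrite eq_sym.
    by split => //; apply: (simp_lift sb).
  exists v, a'; split => //; first by rewrite eq_sym.
  by split => //; apply: (simp_lift sa).
move=> nex.
have cW' : forall p q, p \in W :\ v -> q \in W :\ v -> p != q -> adj G p q.
  move=> p q pW qW pq; apply: NNPP => npq; apply: nex; exists p, q; split => //.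
  by apply/negP.
have [w [wW wv nvw]] : exists w, [/\ w \in W, w != v & ~~ adj G v w].
  case: (eqVneq a v) => [av|av].
    subst a; exists b; split => //; by rewrite eq_sym.
  case: (eqVneq b v) => [bv|bv].
    by subst b; exists a; split => //; rewrite adjC.
  by move: nab; rewrite cW' // !inE ?av ?bv.
exists v, w; split => //; first by rewrite eq_sym.
split => // p q pW qW wp wq pq.
have pv : p != v by apply: contraNneq nvw => <-; rewrite adjC.
have qv : q != v by apply: contraNneq nvw => <-; rewrite adjC.
by apply: cW' => //; rewrite !inE ?pv ?qv.
Qed.

End Chordal.

Section Erase.
Variable X : finType.
Implicit Types (G H : graph X) (e f C D W : {set X}) (x y a b u v : X).

Lemma adj_erase G e a b : adj (G :\ e) a b = ([set a; b] != e) && adj G a b.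
Proof. by rewrite /adj in_setD1. Qed.

Lemma clique3 G x y z : adj G x y -> adj G y z -> adj G x z ->
  clique G [set x; y; z].
Proof.
move=> xy yz xz; apply/cliqueP => a b.
rewrite !inE => /orP[/orP[]|] /eqP-> /orP[/orP[]|] /eqP->; rewrite ?eqxx //= => _;
  by rewrite // adjC.
Qed.

Lemma in_unique_clique G C x y v : loopless G ->
  (forall D, maxclique G D -> [set x; y] \subset D -> D = C) ->
  adj G x y -> adj G v x -> adj G v y -> v \in C.
Proof.
move=> lG h xy vx vy.
have [D [mD sD]] := clique_ext (clique3 vx xy vy).
have eD : [set x; y] \subset D.
  by apply: subset_trans sD; apply/subsetP => w; rewrite !inE => /orP[] ->; rewrite orbT.
rewrite -(h D mD eD); apply: (subsetP sD); by rewrite !inE eqxx.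
Qed.

Lemma exposed2 G e : loopless G -> exposed G e ->
  exists x y, [/\ x != y, e = [set x; y] & adj G x y].
Proof.
move=> lG ex; have [C [eG _ _ _ _]] := exposedE ex.
have [x [y [xy ee]]] := K2 (subsetP lG _ eG).
by exists x, y; split => //; rewrite /adj -ee.
Qed.

Lemma SIMP_erase G e : loopless G -> SIMP G -> exposed G e -> SIMP (G :\ e).
Proof.
move=> lG sG ex.
have [C [eG mC sC nCe hC]] := exposedE ex.
have [x [y [xy ee axy]]] := exposed2 lG ex; subst e.
have gen : forall W v, simp_in G W v -> ~~ (adj G v x && adj G v y) ->
    simp_in (G :\ [set x; y]) W v.
  move=> W v sv nv a b aW bW va vb ab.
  move: va vb; rewrite !adj_erase => /andP[_ va] /andP[_ vb].
  rewrite (sv a b aW bW va vb ab) andbT; apply/eqP => E.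
  by case: (set2_eq E) => [[ea eb]|[ea eb]]; subst a b; move: nv; rewrite va vb.
move=> W W0.
case: (boolP ((x \in W) && (y \in W))) => [/andP[xW yW]|nW].
  case: (classic (exists a b, [/\ a \in W, b \in W, a != b & ~~ adj G a b])) => [ex'|nex].
    have [v1 [v2 [v1W v2W v12 nv12 [s1 s2]]]] := dirac lG sG ex'.
    case: (boolP (adj G v1 x && adj G v1 y)) => [/andP[v1x v1y]|n1]; last first.
      by exists v1 => //; apply: gen.
    case: (boolP (adj G v2 x && adj G v2 y)) => [/andP[v2x v2y]|n2]; last first.
      by exists v2 => //; apply: gen.
    have v1C := in_unique_clique lG hC axy v1x v1y.
    have v2C := in_unique_clique lG hC axy v2x v2y.
    by move: nv12; rewrite (cliqueP _ _ (proj1 (maxcliqueP _ _ mC)) v1 v2 v1C v2C v12).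
  exists x => // a b aW bW; rewrite !adj_erase => /andP[xa ax] /andP[xb bx] ab.
  have adjab : adj G a b by apply: NNPP => h; apply: nex; exists a, b; split => //; apply/negP.
  rewrite adjab andbT; apply/eqP => E.
  have ax' := adj_neq lG ax.
  case: (set2_eq E) => [[ea _]|[ea _]]; subst a; first by rewrite eqxx in ax'.
  by rewrite eqxx in xa.
have [v vW sv] := sG W W0.
exists v => // a b aW bW; rewrite !adj_erase => /andP[_ va] /andP[_ vb] ab.
rewrite (sv a b aW bW va vb ab) andbT; apply/eqP => E.
by case: (set2_eq E) => [[ea eb]|[ea eb]]; subst; move: nW; rewrite aW bW.
Qed.

End Erase.

Section Peel.
Variable X : finType.
Implicit Types (G H : graph X) (e f C D W : {set X}) (x y a b u v : X).

Definition outside1 G W := forall u, u \notin W -> forall p q, p \in W -> q \in W ->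
  adj G u p -> adj G u q -> p = q.

Lemma exposed_peel G W v a b : loopless G -> v \in W -> a \in W -> b \in W ->
  adj G v a -> adj G v b -> a != b -> simp_in G W v -> outside1 G W ->
  exposed G [set v; a].
Proof.
move=> lG vW aW bW va vb ab sv out.
pose C := v |: [set w in W | adj G v w].
have inC w : (w \in C) = (w == v) || (w \in W) && adj G v w by rewrite !inE.
have cC : clique G C.
  apply/cliqueP => p q; rewrite !inC => /orP[/eqP->|/andP[pW vp]] /orP[/eqP->|/andP[qW vq]];
    rewrite ?eqxx // => pq.
  - by rewrite adjC.
  - exact: sv.
have subC D : clique G D -> v \in D -> a \in D -> D \subset C.
  move=> cD vD aD; apply/subsetP => d dD; rewrite inC.
  case: (eqVneq d v) => [-> //|dv] /=.
  have vd : adj G v d by apply: (cliqueP _ _ cD) => //; rewrite eq_sym.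
  case: (boolP (d \in W)) => dW; first by rewrite vd.
  have da : d != a by apply: contraNneq dW => ->.
  have ad : adj G d a by apply: (cliqueP _ _ cD).
  have va' := out d dW v a vW aW (etrans (adjC G d v) vd) ad.
  by move: (adj_neq lG va); rewrite va' eqxx.
have vC : v \in C by rewrite inC eqxx.
have aC : a \in C by rewrite inC aW va orbT.
have mC : maxclique G C.
  apply/maxcliqueP; split => // D cD sCD; apply/eqP; rewrite eqEsubset sCD andbT.
  by apply: subC => //; apply: (subsetP sCD).
apply: (exposedI (C := C)) => //.
- by apply/subsetP => w /set2P[] ->.
- apply/eqP => E; have : b \in C by rewrite inC bW vb orbT.
  rewrite E !inE => /orP[] /eqP bE.
  + by move: (adj_neq lG vb); rewrite bE eqxx.
  + by move: ab; rewrite bE eqxx.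
- move=> D mD sD; have [cD hD] := maxcliqueP _ _ mD.
  have vD : v \in D by apply: (subsetP sD); rewrite !inE eqxx.
  have aD : a \in D by apply: (subsetP sD); rewrite !inE eqxx orbT.
  by apply/esym/hD => //; apply: subC.
Qed.

Lemma cycle_nbrs G s v : uniq s -> 2 < size s -> cycle (adj G) s -> v \in s ->
  exists a b, [/\ a \in s, b \in s, a != b, adj G v a & adj G v b].
Proof.
move=> us ss cs vs.
have E := rot_index vs.
set p := drop _ _ ++ _ in E.
have us' : uniq (v :: p) by rewrite -E rot_uniq.
have cs' : cycle (adj G) (v :: p) by rewrite -E rot_cycle.
have ss' : 2 < size (v :: p) by rewrite -E size_rot.
have mem' w : w \in v :: p -> w \in s by rewrite -E mem_rot.
case: p E us' cs' ss' mem' => [|a [|c p2]] //= E us' cs' ss' mem'.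
move: cs' => /and3P[va _]; rewrite rcons_path => /andP[_ zv].
exists a, (last c p2); split.
- by apply: mem'; rewrite !inE eqxx orbT.
- by apply: mem'; rewrite (in_cons v) (in_cons a) mem_last !orbT.
- apply/eqP => E'; move: us' => /and4P[_ + _ _].
  by rewrite E' mem_last.
- done.
- by rewrite adjC.
Qed.

Lemma noexp_acyclic G : loopless G -> SIMP G -> (forall e, ~~ exposed G e) -> acyclic G.
Proof.
move=> lG sG nex [s [us ss cs]].
suff : forall W, {subset s <= W} -> outside1 G W -> False.
  by move/(_ setT); apply; [move=> w _; rewrite in_setT | move=> u; rewrite in_setT].
move=> W; have [n] := ubnP #|W|; elim: n W => // n IH W /ltnSE leWn sW out.
have W0 : W != set0.
  have : has predT s by rewrite has_predT (ltn_trans _ ss).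
  by case/hasP => w ws _; apply/set0Pn; exists w; apply: sW.
have [v vW sv] := sG W W0.
case: (classic (exists a b, [/\ a \in W, b \in W, a != b, adj G v a & adj G v b])).
  move=> [a [b [aW bW ab va vb]]].
  by move: (nex [set v; a]); rewrite (exposed_peel lG vW aW bW va vb ab sv out).
move=> nab.
have vs : v \notin s.
  apply/negP => vs; have [a [b [aS bS ab va vb]]] := cycle_nbrs us ss cs vs.
  by apply: nab; exists a, b; split => //; apply: sW.
have ltW : #|W :\ v| < #|W| by rewrite (cardsD1 v W) vW.
apply: (IH (W :\ v)) => //.
- exact: leq_trans ltW leWn.
- move=> w ws; rewrite in_setD1 (sW w ws) andbT; apply/eqP => E; by move: vs; rewrite -E ws.
- move=> u; rewrite in_setD1 negb_and negbK => /orP[/eqP-> | uW] p q.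
    move=> /setD1P[_ pW] /setD1P[_ qW] vp vq; apply: NNPP => pq.
    by apply: nab; exists p, q; split => //; apply/eqP.
  move=> /setD1P[_ pW] /setD1P[_ qW]; exact: out.
Qed.

End Peel.

Section Key.
Variable X : finType.
Implicit Types (G H L : graph X) (e f C D W : {set X}) (x y a b u v : X).

Lemma in_set2_neq (a b c : X) : c != a -> c != b -> c \notin [set a; b].
Proof. by move=> ca cb; rewrite !inE negb_or ca cb. Qed.

Lemma proper_witness e C : e \subset C -> C != e -> exists2 z, z \in C & z \notin e.
Proof.
move=> sC nCe; case: (boolP (C \subset e)) => [sCe|/subsetPn[z zC ze]]; last by exists z.
by move: nCe; rewrite eqEsubset sCe sC.
Qed.

Lemma maxclique_sub_clique G D K : maxclique G D -> clique G K -> D \subset K -> K = D.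
Proof. by move=> /maxcliqueP[_ h] cK sDK; apply: h. Qed.

Lemma key_lemma G L x y : loopless G -> SIMP G -> exposed G [set x; y] ->
  (forall f, exposed G f -> f != [set x; y] -> f \in L) ->
  connect (adj ((G :&: L) :\ [set x; y])) x y.
Proof.
move: L; have [n] := ubnP #|G|; elim: n G => // n IH G /ltnSE leGn L lG sG ex hL.
have [C [eG mC sC nCe hC]] := exposedE ex.
have cC := proj1 (maxcliqueP _ _ mC).
have xy : x != y by apply: (adj_neq lG eG).
have xC : x \in C by apply: (subsetP sC); rewrite set21.
have yC : y \in C by apply: (subsetP sC); rewrite set22.
have eneq a b : [set a; b] = [set x; y] -> (a = x /\ b = y) \/ (a = y /\ b = x) := @set2_eq _ a b x y.
pose Wn := [set w | [exists u, adj G w u]].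
have inWn w u : adj G w u -> w \in Wn by move=> h; rewrite inE; apply/existsP; exists u.
have step : forall a b, adj ((G :&: L) :\ [set x; y]) a b ->
   connect (adj ((G :&: L) :\ [set x; y])) a b by move=> a b h; apply: connect1.
have adjGLe a b : [set a; b] \in G -> [set a; b] \in L -> [set a; b] != [set x; y] ->
    adj ((G :&: L) :\ [set x; y]) a b.
  by move=> h1 h2 h3; rewrite /adj in_setD1 h3 in_setI h1 h2.
case: (classic (exists p q, [/\ p \in Wn, q \in Wn, p != q & ~~ adj G p q])); last first.
  move=> ncomp.
  have comp p q : p \in Wn -> q \in Wn -> p != q -> adj G p q.
    by move=> pW qW pq; apply: NNPP => h; apply: ncomp; exists p, q; split => //; apply/negP.
  have cWn : clique G Wn by apply/cliqueP.
  have eqWn D a b : maxclique G D -> a \in D -> b \in D -> a != b -> D = Wn.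
    move=> mD aD bD ab; apply/esym/(maxclique_sub_clique mD cWn).
    have cD := proj1 (maxcliqueP _ _ mD).
    apply/subsetP => d dD; case: (eqVneq d a) => [->|da].
      by apply: (inWn a b); apply: (cliqueP _ _ cD).
    by apply: (inWn d a); apply: (cliqueP _ _ cD).
  have CW := eqWn C x y mC xC yC xy.
  have [z zC ze] := proper_witness sC nCe.
  have zx : z != x by apply: contraNneq ze => ->; rewrite set21.
  have zy : z != y by apply: contraNneq ze => ->; rewrite set22.
  have expo a b : a \in C -> b \in C -> a != b -> (exists c, [/\ c \in C, c != a & c != b]) ->
      exposed G [set a; b].
    move=> aC bC ab [c [cC' ca cb]].
    apply: (exposedI (C := C)) => //.
    - exact: (cliqueP _ _ cC).
    - by apply/subsetP => w /set2P[] ->.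
    - by apply/eqP => E; move: cC'; rewrite E (negbTE (in_set2_neq ca cb)).
    - move=> D mD sD; rewrite CW; apply: (eqWn D a b mD) => //.
      + by apply: (subsetP sD); rewrite set21.
      + by apply: (subsetP sD); rewrite set22.
  have exz : exposed G [set x; z].
    by apply: (expo x z xC zC); [rewrite eq_sym | exists y; split => //; rewrite eq_sym].
  have ezy : exposed G [set z; y].
    by apply: (expo z y zC yC) => //; exists x; split => //; rewrite eq_sym.
  have nxz : [set x; z] != [set x; y].
    by apply/eqP => /eneq [[_ E]|[E _]]; [move: zy | move: xy]; rewrite E eqxx.
  have nzy : [set z; y] != [set x; y].
    by apply/eqP => /eneq [[E _]|[E _]]; [move: zx | move: zy]; rewrite E eqxx.
  have xz' : adj G x z by apply: (cliqueP _ _ cC) => //; rewrite eq_sym.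
  have zy' : adj G z y by apply: (cliqueP _ _ cC).
  apply: (connect_trans (y := z)); apply: connect1; apply: adjGLe => //; exact: hL.
move=> ncomp.
have [v1 [v2 [v1W v2W v12 nv12 [s1 s2]]]] := dirac lG sG ncomp.
have [v [vW nvC sv]] : exists v, [/\ v \in Wn, v \notin C & simp_in G Wn v].
  case: (boolP (v1 \in C)) => v1C; last by exists v1.
  case: (boolP (v2 \in C)) => v2C; last by exists v2.
  by move: nv12; rewrite (cliqueP _ _ cC v1 v2 v1C v2C v12).
have svT : simp_in G setT v.
  move=> a b _ _ va vb ab; apply: sv => //; [apply: (inWn a v) | apply: (inWn b v)];
    by rewrite adjC.
have [u0 vu0] : exists u0, adj G v u0 by move: vW; rewrite inE => /existsP.
have vx : v != x by apply: contraNneq nvC => ->.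
have vy : v != y by apply: contraNneq nvC => ->.
pose G' := [set f in G | v \notin f].
pose N := [set w | adj G v w].
pose L' := L :|: [set f : {set X} | f \subset N].
have adjG' a b : adj G' a b = [&& adj G a b, a != v & b != v].
  by rewrite /adj inE !inE negb_or; congr (_ && _); rewrite ![v == _]eq_sym.
have sG'G : G' \subset G by apply/subsetP => f; rewrite inE => /andP[].
have lG' : loopless G' := subset_trans sG'G lG.
have cl'G D : clique G' D -> clique G D := clique_sub sG'G.
have clG' D : clique G D -> v \notin D -> clique G' D.
  move=> cD vD; apply/cliqueP => a b aD bD ab; rewrite adjG' (cliqueP _ _ cD a b aD bD ab).
  have av : a != v by apply: contraNneq vD => <-.
  have bv : b != v by apply: contraNneq vD => <-.
  by rewrite av bv.
have ltG : #|G'| < #|G|.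
  apply: proper_card; rewrite properE sG'G /=; apply/subsetPn; exists [set v; u0] => //.
  by rewrite inE set21 andbF.
have sG' : SIMP G'.
  move=> W W0; case: (boolP (v \in W)) => vW'.
    by exists v => // a b _ _; rewrite adjG' eqxx /= andbF.
  have [w wW sw] := sG W W0; exists w => // a b aW bW; rewrite !adjG' => /andP[wa _] /andP[wb _] ab.
  rewrite (sw a b aW bW wa wb ab) /=.
  have av : a != v by apply: contraNneq vW' => <-.
  have bv : b != v by apply: contraNneq vW' => <-.
  by rewrite av bv.
have eG' : [set x; y] \in G'.
  by rewrite inE eG /= !inE negb_or vx vy.
have ex' : exposed G' [set x; y].
  have mC' : maxclique G' C.
    apply/maxcliqueP; split; first exact: clG'.
    by move=> D cD sCD; apply: (maxclique_sub_clique mC (cl'G D cD)).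
  apply: (exposedI (C := C)) => // D mD sD.
  have [D' [mD' sDD']] := clique_ext (cl'G D (proj1 (maxcliqueP _ _ mD))).
  have DC : D' = C by apply: hC => //; apply: subset_trans sDD'.
  by apply/esym/(maxclique_sub_clique mD (proj1 (maxcliqueP _ _ mC'))); rewrite -DC.
have hL' : forall f, exposed G' f -> f != [set x; y] -> f \in L'.
  move=> f exf nfe.
  have [a [b [ab fE aadj]]] := exposed2 lG' exf.
  apply/setUP; case: (boolP (f \subset N)) => fN; first by right; rewrite inE.
  left.
  apply: hL => //.
  have [D0 [fG' mD0 sD0 nD0 hD0]] := exposedE exf.
  have vnot D : clique G D -> f \subset D -> v \notin D.
    move=> cD sfD; apply/negP => vD; move: fN; rewrite fE.
    move: aadj; rewrite adjG' => /and3P[_ av bv].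
    have aD : a \in D by apply: (subsetP sfD); rewrite fE set21.
    have bD : b \in D by apply: (subsetP sfD); rewrite fE set22.
    apply/negP/negPn/subsetP => w /set2P[] ->; rewrite inE; apply: (cliqueP _ _ cD) => //;
      by rewrite eq_sym.
  have mD0G : maxclique G D0.
    apply/maxcliqueP; split; first exact: cl'G (proj1 (maxcliqueP _ _ mD0)).
    move=> D cD sD; apply: (maxclique_sub_clique mD0) => //; apply: clG' => //.
    by apply: vnot => //; apply: subset_trans sD.
  apply: (exposedI (C := D0)) => //; first by apply: (subsetP sG'G).
  move=> D mD sfD; apply: hD0 => //.
  have cD := proj1 (maxcliqueP _ _ mD).
  apply/maxcliqueP; split; first by apply: clG' => //; apply: vnot.
  by move=> D' cD' sDD'; apply: (maxclique_sub_clique mD (cl'G D' cD')).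
have IH' := IH G' (leq_trans ltG leGn) L' lG' sG' ex' hL'.
apply: connect_sub IH' => a b.
rewrite /adj in_setD1 => /andP[nab]; rewrite in_setI => /andP[abG'].
rewrite inE => /orP[abL|].
  by apply: connect1; apply: adjGLe => //; apply: (subsetP sG'G).
rewrite inE => abN.
have va : adj G v a by have := subsetP abN a (set21 _ _); rewrite inE.
have vb : adj G v b by have := subsetP abN b (set22 _ _); rewrite inE.
have ab : a != b by apply: (adj_neq lG' abG').
have outT : outside1 G setT by move=> w; rewrite in_setT.
have exa : exposed G [set v; a] := exposed_peel lG (in_setT v) (in_setT a) (in_setT b) va vb ab svT outT.
have exb : exposed G [set v; b].
  by apply: (exposed_peel lG (in_setT v) (in_setT b) (in_setT a) vb va) => //; rewrite eq_sym.
have nve c : [set v; c] != [set x; y].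
  by apply/eqP => /eneq [[E _]|[E _]]; [move: vx | move: vy]; rewrite E eqxx.
have e1 : adj ((G :&: L) :\ [set x; y]) v a := adjGLe v a va (hL _ exa (nve a)) (nve a).
have e2 : adj ((G :&: L) :\ [set x; y]) v b := adjGLe v b vb (hL _ exb (nve b)) (nve b).
apply: (connect_trans (y := v)); apply: connect1; last exact: e2.
by move: e1; rewrite /adj setUC.
Qed.

End Key.

Section Forest.
Variable X : finType.
Implicit Types (G H : graph X) (e f C D W K : {set X}) (x y a b u v : X).

Definition cls H x := [set y | connect (adj H) x y].
Definition comps H := (cls H) @: [set: X].
Definition gl H (K : {set X}) := \bigcup_(y in K) cls H y.

Lemma csym H : connect_sym (adj H).
Proof. by apply: sym_connect_sym => x y; apply: adjC. Qed.

Lemma cls_eq H x y : connect (adj H) x y -> cls H x = cls H y.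
Proof.
move=> cxy; apply/setP => z; rewrite !inE.
apply/idP/idP => h; first by apply: connect_trans h; rewrite csym.
exact: connect_trans cxy h.
Qed.

Lemma cls_self H x : x \in cls H x.
Proof. by rewrite inE connect0. Qed.

Lemma gl_cls H1 H2 x : (forall a b, adj H1 a b -> connect (adj H2) a b) ->
  gl H2 (cls H1 x) = cls H2 x.
Proof.
move=> h; apply/setP => z; apply/bigcupP/idP.
  move=> [y]; rewrite inE => cxy; rewrite (cls_eq (y := x)) //.
  by rewrite csym; apply: connect_sub cxy.
by move=> zx; exists x => //; apply: cls_self.
Qed.

Lemma comps_le H1 H2 : (forall a b, adj H1 a b -> connect (adj H2) a b) ->
  #|comps H2| <= #|comps H1|.
Proof.
move=> h.
have -> : comps H2 = gl H2 @: comps H1.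
  by rewrite /comps -imset_comp; apply: eq_imset => x /=; rewrite gl_cls.
exact: leq_imset_card.
Qed.

Lemma acyclic_sub H H' : H' \subset H -> acyclic H -> acyclic H'.
Proof.
move=> sH ac [s [us ss cs]]; apply: ac; exists s; split => //.
by apply: sub_cycle cs => x y; apply: (subsetP sH).
Qed.

Lemma connect_set0 x y : connect (adj (set0 : graph X)) x y -> x = y.
Proof.
by case/connectP => [[|z p]] //= ; rewrite /adj in_set0.
Qed.

Lemma acyc_split H a b : acyclic H -> [set a; b] \in H -> a != b ->
  ~~ connect (adj (H :\ [set a; b])) a b.
Proof.
move=> ac fH ab; apply/negP => /connectP[p pp lp].
move: lp; case: (shortenP pp) => p' pp' up' _ lp'.
case: p' pp' up' lp' => [|c [|d q]] /=.
- by move=> _ _ E; move: ab; rewrite E eqxx.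
- by rewrite andbT => cab _ E; move: cab; rewrite -E /adj in_setD1 eqxx.
- move=> pq uq lq; apply: ac; exists [:: a, c, d & q]; split => //.
  rewrite /cycle rcons_path; apply/andP; split.
    apply: (sub_path _ (pq : path (adj (H :\ [set a; b])) a [:: c, d & q])).
    by move=> x y; rewrite /adj in_setD1 => /andP[].
  by rewrite /= -lq /adj setUC.
Qed.

Local Notation cc H a b := (connect (adj (H :\ [set a; b]))).

Lemma connect_split H a b x y : [set a; b] \in H ->
  connect (adj H) x y ->
  cc H a b x y || (cc H a b x a || cc H a b x b) && (cc H a b y a || cc H a b y b).
Proof.
move=> fH /connectP[p pp ->].
elim: p x pp => [|z p IH] x /=; first by rewrite connect0.
move=> /andP[xz pz]; have := IH z pz.
set w := last z p.
case: (boolP ([set x; z] == [set a; b])) => [/eqP E|nE].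
  have xab : cc H a b x a || cc H a b x b by case: (set2_eq E) => [[-> _]|[-> _]]; rewrite connect0 ?orbT.
  have zab : cc H a b z a || cc H a b z b by case: (set2_eq E) => [[_ ->]|[_ ->]]; rewrite connect0 ?orbT.
  rewrite xab /= => /orP[czw|/andP[_ ->]]; last by rewrite orbT.
  apply/orP; right; case/orP: zab => h; rewrite csym in czw.
    by rewrite (connect_trans czw h).
  by rewrite (connect_trans czw h) orbT.
have cxz : cc H a b x z by apply: connect1; rewrite /adj in_setD1 nE.
move=> /orP[czw|/andP[zab ->]].
  by rewrite (connect_trans cxz czw).
rewrite andbT; apply/orP; right.
by case/orP: zab => h; rewrite (connect_trans cxz h) ?orbT.
Qed.

Lemma card_comps0 : #|comps (set0 : graph X)| = #|X|.
Proof.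
have -> : comps set0 = (@set1 X) @: [set: X].
  apply: eq_imset => x; apply/setP => y; rewrite !inE.
  apply/idP/eqP => [/connect_set0 -> //| ->]; exact: connect0.
by rewrite card_imset ?cardsT //; apply: set1_inj.
Qed.

Lemma acyclic_count H : loopless H -> acyclic H -> #|H| + #|comps H| = #|X|.
Proof.
have [n] := ubnP #|H|; elim: n H => // n IH H /ltnSE leHn lH ac.
case: (set_0Vmem H) => [->|[f fH]]; first by rewrite cards0 card_comps0.
have [a [b [ab fE]]] := K2 (subsetP lH _ fH); subst f.
set H' := H :\ [set a; b].
have sH' : H' \subset H by apply: subD1set.
have eH : #|H| = #|H'|.+1 by rewrite (cardsD1 [set a; b] H) fH.
have := IH H' _ (subset_trans sH' lH) (acyclic_sub sH' ac).
rewrite eH in leHn => /(_ leHn).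
suff -> : #|comps H'| = #|comps H|.+1 by rewrite eH addSn addnS.
have nab := acyc_split ac fH ab.
have h' : forall p q, adj H' p q -> connect (adj H) p q.
  by move=> p q; rewrite /adj in_setD1 => /andP[_ h]; apply: connect1.
have -> : comps H = gl H @: comps H'.
  by rewrite /comps -imset_comp; apply: eq_imset => x /=; rewrite gl_cls.
have Ka : cls H' a \in comps H' by apply: imset_f; rewrite in_setT.
have Kb : cls H' b \in comps H' by apply: imset_f; rewrite in_setT.
have Kab : cls H' a != cls H' b.
  by apply/eqP => E; move: nab; have := cls_self H' b; rewrite -E inE => ->.
have gab : gl H (cls H' b) = gl H (cls H' a).
  rewrite !gl_cls //; apply: cls_eq; rewrite csym; apply: connect1.
  by rewrite /adj.
have -> : gl H @: comps H' = gl H @: (comps H' :\ cls H' b).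
  apply/setP => K; apply/imsetP/imsetP => [[K0 K0in ->]|[K0 K0in ->]].
    case: (eqVneq K0 (cls H' b)) => [->|ne]; first by exists (cls H' a); rewrite ?gab // in_setD1 Kab.
    by exists K0; rewrite // in_setD1 ne.
  by exists K0 => //; move: K0in; rewrite in_setD1 => /andP[].
rewrite card_in_imset; first by rewrite (cardsD1 (cls H' b)) Kb.
move=> K1 K2 /setD1P[n1 /imsetP[x1 _ E1]] /setD1P[n2 /imsetP[x2 _ E2]]; subst K1 K2.
rewrite !gl_cls // => E.
have cx : connect (adj H) x1 x2 by have := cls_self H x2; rewrite -E inE.
have := connect_split fH cx => /= /orP[c12|/andP[h1 h2]]; first exact: cls_eq.
have c1 : connect (adj H') x1 a.
  case/orP: h1 => // h1; move: n1; rewrite (cls_eq h1) eqxx //.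
have c2 : connect (adj H') x2 a.
  case/orP: h2 => // h2; move: n2; rewrite (cls_eq h2) eqxx //.
by apply: cls_eq; apply: connect_trans c1 _; rewrite csym.
Qed.

Lemma forest_le H1 H2 : loopless H1 -> loopless H2 -> acyclic H1 -> acyclic H2 ->
  (forall a b, adj H1 a b -> connect (adj H2) a b) -> #|H1| <= #|H2|.
Proof.
move=> l1 l2 a1 a2 h.
have e1 := acyclic_count l1 a1; have e2 := acyclic_count l2 a2.
have := comps_le h; rewrite -(leq_add2l #|H1|) e1 -e2 leq_add2r.
done.
Qed.

End Forest.

Local Open Scope ring_scope.

Lemma argmax_ex (R : realType) (I : finType) (P : pred I) (w : I -> R) :
  (exists i, P i) -> exists i, P i /\ forall j, P j -> w j <= w i.
Proof.
move=> [i0 Pi0].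
case: (@arg_maxP _ _ I i0 P w Pi0) => i Pi h.
by exists i; split => // j Pj; apply: h.
Qed.

Section Major.
Variables (R : realType) (I : finType) (w : I -> R).

Lemma major (A B : {set I}) : #|A| = #|B| ->
  (forall s, #|[set i in A | (w i <= s)%R]| <= #|[set i in B | (w i <= s)%R]|)%N ->
  \sum_(i in B) w i <= \sum_(i in A) w i.
Proof.
move: B; have [n] := ubnP #|A|; elim: n A => // n IH A /ltnSE leAn B eAB dom.
case: (set_0Vmem A) => [A0|[a0 a0A]].
  have B0 : B = set0 by apply/eqP; rewrite -cards_eq0 -eAB A0 cards0.
  by rewrite A0 B0 !big_set0.
have [a [aA ha]] := argmax_ex (P := mem A) w (ex_intro _ a0 a0A).
have {}aA : a \in A := aA.
have [b0 b0B] : exists b, b \in B.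
  by apply/set0Pn; rewrite -card_gt0 -eAB card_gt0; apply/set0Pn; exists a0.
have [b [bB hb]] := argmax_ex (P := mem B) w (ex_intro _ b0 b0B).
have {}bB : b \in B := bB.
have allA s : w a <= s -> [set i in A | w i <= s] = A.
  by move=> h; apply/setP => i; rewrite inE; case: (boolP (i \in A)) => // iA; rewrite (le_trans (ha i iA) h).
have allB s : w b <= s -> [set i in B | w i <= s] = B.
  by move=> h; apply/setP => i; rewrite inE; case: (boolP (i \in B)) => // iB; rewrite (le_trans (hb i iB) h).
have ba : w b <= w a.
  have := dom (w a); rewrite allA // eAB => hc.
  have : [set i in B | w i <= w a] = B.
    by apply/eqP; rewrite eqEcard hc andbT; apply/subsetP => i; rewrite inE => /andP[].
  move=> E; have : b \in [set i in B | w i <= w a] by rewrite E.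
  by rewrite inE => /andP[].
have eA : #|A| = (#|A :\ a|).+1 by rewrite (cardsD1 a A) aA.
have eB : #|B| = (#|B :\ b|).+1 by rewrite (cardsD1 b B) bB.
have filtD (C : {set I}) c s : [set i in C :\ c | w i <= s] = [set i in C | w i <= s] :\ c.
  by apply/setP => i; rewrite !inE andbA.
have IH' := IH (A :\ a) _ (B :\ b).
rewrite (bigD1 a aA) (bigD1 b bB) /=.
apply: lerD => //.
have -> : \sum_(i in B | i != b) w i = \sum_(i in B :\ b) w i.
  by apply: eq_bigl => i; rewrite in_setD1 andbC.
have -> : \sum_(i in A | i != a) w i = \sum_(i in A :\ a) w i.
  by apply: eq_bigl => i; rewrite in_setD1 andbC.
apply: IH'.
- by rewrite -ltnS -eA.
- by apply/eq_add_S; rewrite -eA -eB.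
move=> s.
case: (leP (w b) s) => [lbs|slb].
  have eAB2 : #|B :\ b| = #|A :\ a| by apply/eq_add_S; rewrite -eA -eB eAB.
  rewrite (filtD B b s) allB // eAB2.
  apply: subset_leq_card; apply/subsetP => i; rewrite inE => /andP[] //.
have bN : b \notin [set i in B | w i <= s] by rewrite inE bB /= -ltNge.
have nin (C : {set I}) c : c \notin C -> C :\ c = C.
  by move=> h; apply/setP => i; rewrite !inE; case: eqVneq => // ->; rewrite (negbTE h).
rewrite (filtD B b s) (filtD A a s) (nin _ b bN).
apply: leq_trans _ (dom s); apply: subset_leq_card; apply: subD1set.
Qed.

End Major.

Section Part1.
Variables (R : realType) (X : finType) (d : X -> X -> R).
Implicit Types (G H T : graph X) (e f : {set X}) (x y a b u v : X).

Definition light G s := [set f in G | ew d f <= s].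
Definition Bprop G := forall u v, connect (adj (light G (ew d [set u; v]))) u v.
Definition Inv G := [/\ loopless G, SIMP G & Bprop G].

Lemma light_sub G s : light G s \subset G.
Proof. by apply/subsetP => f; rewrite inE => /andP[]. Qed.

Lemma light_mono G s t : s <= t -> {subset light G s <= light G t}.
Proof. by move=> st f; rewrite !inE => /andP[-> h] /=; apply: le_trans st. Qed.

Lemma connect_mono G G' x y : G \subset G' -> connect (adj G) x y -> connect (adj G') x y.
Proof.
move=> /subsetP s; apply: connect_sub => a b h; apply: connect1; exact: s.
Qed.

Lemma Inv_K : Inv (complete_graph X).
Proof.
split; first exact: subxx.
  move=> W /set0Pn[v vW]; exists v => // a b _ _ _ _ ab.
  by rewrite /adj inE cards2 ab.
move=> u v; case: (eqVneq u v) => [->|uv]; first exact: connect0.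
by apply: connect1; rewrite /adj inE inE cards2 uv /=.
Qed.

Lemma derasureE G H : derasure d G H ->
  exists e, [/\ exposed G e, H = G :\ e & forall e', exposed G e' -> ew d e' <= ew d e].
Proof.
case/existsP => e /and3P[ex /eqP-> /forallP h]; exists e; split => // e' ex'.
by have /implyP := h e'; apply.
Qed.

Lemma noderasure G : ~ (exists H, derasure d G H) -> forall e, ~~ exposed G e.
Proof.
move=> nd e; apply/negP => ex; apply: nd.
have [e0 [ex0 h]] := argmax_ex (P := exposed G) (ew d) (ex_intro _ e ex).
exists (G :\ e0); apply/existsP; exists e0; rewrite ex0 eqxx /=.
by apply/forallP => e'; apply/implyP => /h.
Qed.

Lemma Inv_step G H : Inv G -> derasure d G H -> Inv H.
Proof.
move=> [lG sG bG] /derasureE [e [ex -> he]].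
have sub : G :\ e \subset G by apply: subD1set.
split; first exact: subset_trans sub lG.
  exact: SIMP_erase.
move=> u v; apply: connect_sub (bG u v) => a b.
rewrite /adj inE => /andP[abG abl].
case: (eqVneq [set a; b] e) => [E|ne].
  subst e.
  have K := key_lemma (L := [set f | ew d f <= ew d [set a; b]]) lG sG ex.
  have K' : connect (adj ((G :&: [set f | ew d f <= ew d [set a; b]]) :\ [set a; b])) a b.
    by apply: K => f exf _; rewrite inE; apply: he.
  apply: connect_mono K'; apply/subsetP => f.
  rewrite !inE => /andP[nf /andP[fG fl]]; rewrite nf fG /=.
  by apply: le_trans fl abl.
by apply: connect1; rewrite /adj !inE ne abG abl.
Qed.

Lemma Inv_path G gs : Inv G -> path (derasure d) G gs -> Inv (last G gs).
Proof.
elim: gs G => [|H gs IH] G //= iG /andP[dGH p].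
by apply: IH => //; apply: Inv_step dGH.
Qed.

Lemma Inv_final_tree G : Inv G -> ~ (exists H, derasure d G H) -> spanning_tree G.
Proof.
move=> [lG sG bG] nd; split => //.
  move=> x y; apply: connect_mono (bG x y); apply: light_sub.
exact: noexp_acyclic lG sG (noderasure nd).
Qed.

Lemma tree_card T T' : spanning_tree T -> spanning_tree T' -> #|T| = #|T'|.
Proof.
move=> [l1 c1 a1] [l2 c2 a2]; apply/eqP; rewrite eqn_leq.
have h1 := forest_le l1 l2 a1 a2 (fun a b _ => c2 a b).
have h2 := forest_le l2 l1 a2 a1 (fun a b _ => c1 a b).
by rewrite h1 h2.
Qed.

Lemma Inv_final_MST G : Inv G -> ~ (exists H, derasure d G H) -> is_MST d G.
Proof.
move=> iG nd; have tG := Inv_final_tree iG nd; split => // T' tT'.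
have [lG _ bG] := iG; have [lT cT aT] := tT'; have [_ _ aG] := tG.
rewrite /total_weight; apply: major; first exact: tree_card.
move=> s; apply: (forest_le (H1 := light T' s) (H2 := light G s)).
- exact: subset_trans (light_sub _ _) lT.
- exact: subset_trans (light_sub _ _) lG.
- exact: acyclic_sub (light_sub _ _) aT.
- exact: acyclic_sub (light_sub _ _) aG.
move=> a b; rewrite /adj inE => /andP[_ abs].
apply: connect_mono (bG a b); apply/subsetP => f; apply: (@light_mono G (ew d [set a; b]) s abs).
Qed.

Theorem part1 gs : path (derasure d) (complete_graph X) gs ->
  ~ (exists H, derasure d (last (complete_graph X) gs) H) ->
  is_MST d (last (complete_graph X) gs).
Proof. by move=> p nd; apply: Inv_final_MST => //; apply: Inv_path Inv_K p. Qed.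

End Part1.

Section Part2.
Variables (R : realType) (X : finType).
Implicit Types (G H T : graph X) (e f : {set X}) (x y a b u v : X).

Lemma enum2 f : #|f| = 2%N -> exists x y, enum f = [:: x; y] /\ f = [set x; y].
Proof.
move=> cf; have : size (enum f) = 2%N by rewrite -cardE.
case E: (enum f) => [|x [|y [|z s]]] // _; exists x, y; split => //.
by apply/setP => w; rewrite -mem_enum E !inE.
Qed.

Lemma eps_ex (w : {set X} -> R) : exists eps, 0 < eps /\
  forall f g, w g < w f -> eps + w g < w f.
Proof.
suff : forall s : seq ({set X} * {set X}), exists eps, 0 < eps /\
    forall p, p \in s -> w p.2 < w p.1 -> eps + w p.2 < w p.1.
  case/(_ (enum [set: ({set X} * {set X})%type])) => eps [ep h].
  exists eps; split => // f g lt; apply: (h (f, g)) => //; by rewrite mem_enum in_setT.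
elim => [|p s [eps [ep h]]]; first by exists 1; split.
case: (ltP (w p.2) (w p.1)) => lp; last first.
  exists eps; split => // q; rewrite inE => /orP[/eqP->|qs]; last exact: h.
  by rewrite ltNge lp.
exists (Num.min eps ((w p.1 - w p.2) / 2)); split.
  by rewrite lt_min ep /= divr_gt0 // subr_gt0.
move=> q; rewrite inE => /orP[/eqP->|qs] lq.
  apply: le_lt_trans (_ : (w p.1 - w p.2) / 2 + w p.2 < w p.1).
    by rewrite lerD2r ge_min lexx orbT.
  lra.
apply: le_lt_trans (h q qs lq); by rewrite lerD2r ge_min lexx.
Qed.


Lemma exists_maxseq (dd : X -> X -> R) G : exists gs,
  path (derasure dd) G gs /\ ~ (exists H, derasure dd (last G gs) H).
Proof.
have [n] := ubnP #|G|; elim: n G => // n IH G /ltnSE leGn.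
case: (classic (exists H, derasure dd G H)) => [[H dGH]|nd]; last by exists [::].
have [e [ex eH _]] := derasureE dGH.
have [C [eG _ _ _ _]] := exposedE ex.
have ltH : (#|H| < #|G|)%N by rewrite eH (cardsD1 e G) eG.
have [gs [p nd]] := IH H (leq_trans ltH leGn).
by exists (H :: gs); rewrite /= dGH p.
Qed.

Lemma loopless_step (dd : X -> X -> R) G H : loopless G -> derasure dd G H -> loopless H.
Proof.
move=> lG /derasureE[e [_ -> _]]; apply: subset_trans lG; apply: subD1set.
Qed.

Lemma acyclic_noexp G e : loopless G -> acyclic G -> ~~ exposed G e.
Proof.
move=> lG ac; apply/negP => ex.
have [x [y [xy ee axy]]] := exposed2 lG ex; subst e.
have [C [_ mC sC nCe _]] := exposedE ex.
have [z zC ze] := proper_witness sC nCe.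
have cC := proj1 (maxcliqueP _ _ mC).
have xC : x \in C by apply: (subsetP sC); rewrite set21.
have yC : y \in C by apply: (subsetP sC); rewrite set22.
have zx : z != x by apply: contraNneq ze => ->; rewrite set21.
have zy : z != y by apply: contraNneq ze => ->; rewrite set22.
apply: ac; exists [:: x; y; z]; split => //.
  by rewrite /= !inE negb_or xy eq_sym zx eq_sym zy.
rewrite /cycle /= axy; rewrite !(cliqueP _ _ cC) //; by rewrite eq_sym.
Qed.

Lemma tree_noderasure (dd : X -> X -> R) T : spanning_tree T -> ~ (exists H, derasure dd T H).
Proof.
move=> [lT _ aT] [H /derasureE[e [ex _ _]]].
by move: (acyclic_noexp e lT aT); rewrite ex.
Qed.

Theorem part2 (d : X -> X -> R) T : is_MST d T ->
  exists gs : seq (graph X),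
    [/\ path (derasure d) (complete_graph X) gs,
        last (complete_graph X) gs = T &
        ~ (exists H : graph X, derasure d T H)].
Proof.
move=> [tT mT].
have [eps [ep heps]] := eps_ex (ew d).
pose c f := if f \in T then 0 else eps.
pose d' x y := d x y + c [set x; y].
have ew' f : f \in complete_graph X -> ew d' f = ew d f + c f.
  rewrite inE => /eqP /enum2 [x [y [E fE]]].
  by rewrite /ew E fE.
have c0 f : 0 <= c f by rewrite /c; case: ifP => // _; apply: ltW.
have trans G H : loopless G -> derasure d' G H -> derasure d G H.
  move=> lG /derasureE[e [ex eH he]].
  have [C [eG _ _ _ _]] := exposedE ex.
  apply/existsP; exists e; rewrite ex eH eqxx /=; apply/forallP => e'; apply/implyP => ex'.
  have [C' [e'G _ _ _ _]] := exposedE ex'.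
  have := he e' ex'; rewrite !ew' ?(subsetP lG) // => h.
  rewrite leNgt; apply/negP => lt.
  have := heps _ _ lt; rewrite ltNge => /negP; apply.
  have ce : c e <= eps by rewrite /c; case: ifP => // _; apply: ltW.
  have := c0 e'; lra.
have [gs [p nd]] := exists_maxseq d' (complete_graph X).
have pd : path (derasure d) (complete_graph X) gs.
  have : loopless (complete_graph X) by apply: subxx.
  elim: gs (complete_graph X) p {nd} => [|H gs IH] G //= /andP[dGH pH] lG.
  by rewrite (trans _ _ lG dGH) /=; apply: IH pH (loopless_step lG dGH).
set F := last _ gs in nd *.
have [tF mF] := part1 p nd.
have [lF _ _] := tF.
have twT : total_weight d' T = total_weight d T.
  rewrite /total_weight; apply: eq_bigr => f fT.
  have [lT _ _] := tT.
  have fK : f \in complete_graph X := subsetP lT f fT.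
  by rewrite (ew' f fK) /c fT addr0.
have twF : total_weight d' F = total_weight d F + \sum_(f in F) c f.
  rewrite /total_weight -big_split /=; apply: eq_bigr => f fF.
  by rewrite ew' // (subsetP lF).
have FT : F \subset T.
  apply/subsetP => f fF; apply: NNPP => nfT.
  have h1 := mF T tT; have h2 := mT F tF.
  have : c f <= \sum_(g in F) c g.
    rewrite (bigD1 f fF) /= lerDl; apply: sumr_ge0 => g _; exact: c0.
  rewrite /c (negbTE (introN idP nfT)) => h3.
  move: h1; rewrite twT twF => h1.
  have : eps <= 0 by lra.
  by rewrite leNgt ep.
have FeqT : F = T.
  apply/eqP; rewrite eqEcard FT /=.
  by rewrite (tree_card tT tF).
exists gs; split => //.
exact: tree_noderasure.
Qed.

End Part2.

Theorem corollary3p3 (R : realType) (X : finType) (d : X -> X -> R) :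
  is_metric d ->
  (forall gs : seq (graph X),
      path (derasure d) (complete_graph X) gs ->
      ~ (exists H : graph X, derasure d (last (complete_graph X) gs) H) ->
      is_MST d (last (complete_graph X) gs)) /\
  (forall T : graph X, is_MST d T ->
      exists gs : seq (graph X),
        [/\ path (derasure d) (complete_graph X) gs,
            last (complete_graph X) gs = T &
            ~ (exists H : graph X, derasure d T H)]).
Proof.
move=> _; split.
  by move=> gs p nd; apply: part1.
by move=> T mT; apply: part2.
Qed.
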